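(* In the dynamic oligopoly model of the context, suppose that $c$ is continuous, increasing and convex on $A$ and that $u(x,m)$ is discretely convex and strictly increasing in $x$ and continuous in $m$. Then for every $x\in X$ and $m$, the function $a\mapsto H(x,a;m,V)=u(x,m)-c(a)+\beta\sum_{y}W(x,a,y)V(y,m)$ is strictly concave on $A$; hence the optimal policy correspondence $G(x,m)=\arg\max_{a\in A}H(x,a;m,V)$ is single-valued and there is a unique optimal policy $g$.
   Context: Dynamic oligopoly model. States $X=\{0,1,2,\dots\}$; actions $A=[\underline a,1]$, $0<\underline a<1$. For $x\ge1$: $W(x,a,x+1)=\frac{(1-\delta)a}{1+a}$, $W(x,a,x)=\frac{1-\delta+\delta a}{1+a}$, $W(x,a,x-1)=\frac{\delta}{1+a}$, otherwise $0$; $W(0,a,1)=\frac{(1-\delta)a}{1+a}$, $W(0,a,0)=1-W(0,a,1)$; $\delta\in(0,1)$. Payoff $u(x,m)-c(a)$, discount $\beta\in(0,1)$. For fixed $m$, the value function $V(x,m)$ is assumed finite, satisfies $V(x,m)=\max_{a\in A}\{u(x,m)-c(a)+\beta\sum_y W(x,a,y)V(y,m)\}$, and is the pointwise limit of $T^nf$ for any $f$ (in particular $f\equiv0$), where $Tf(x,m)=\max_{a\in A}\{u(x,m)-c(a)+\beta\sum_yW(x,a,y)f(y,m)\}$. A function $h:X\to\mathbb{R}$ is discretely convex if $h(x+2)-2h(x+1)+h(x)\ge0$ for all $x\ge0$. *)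

(* Defs.v *)
From HB Require Import structures.
From mathcomp Require Import all_boot all_order all_algebra.
From mathcomp Require Import all_classical all_reals all_analysis.
Set Implicit Arguments. Unset Strict Implicit. Unset Printing Implicit Defensive.
Import Order.TTheory GRing.Theory Num.Theory.
Import numFieldNormedType.Exports.
Local Open Scope ring_scope.
Local Open Scope classical_set_scope.

Section Model.
Variables (R : realType) (M : topologicalType).
Variables (alo delta beta : R).

Definition inA (a : R) : bool := (alo <= a) && (a <= 1).
Definition Aset : set R := [set a | inA a].

Definition W (x : nat) (a : R) (y : nat) : R :=
  if x == 0%N then
    (if y == 1%N then (1 - delta) * a / (1 + a)
     else if y == 0%N then 1 - (1 - delta) * a / (1 + a) else 0)
  else if y == x.+1 then (1 - delta) * a / (1 + a)
  else if y == x then (1 - delta + delta * a) / (1 + a)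
  else if y.+1 == x then delta / (1 + a)
  else 0.

(* sum_y W(x,a,y) f(y): W(x,a,y) = 0 for y >= x+2, so the sum is finite *)
Definition EW (x : nat) (a : R) (f : nat -> R) : R :=
  \sum_(y < x.+2) W x a y * f y.

Definition H (u : nat -> M -> R) (c : R -> R) (f : nat -> M -> R)
  (x : nat) (m : M) (a : R) : R :=
  u x m - c a + beta * EW x a (fun y => f y m).

Definition Top (u : nat -> M -> R) (c : R -> R) (f : nat -> M -> R)
  : nat -> M -> R :=
  fun x m => sup [set H u c f x m a | a in Aset].

Definition discretely_convex (h : nat -> R) : Prop :=
  forall x : nat, 0 <= h x.+2 - 2 * h x.+1 + h x.

Definition strictly_concave_on (S : set R) (g : R -> R) : Prop :=
  forall a b t, S a -> S b -> a != b -> 0 < t -> t < 1 ->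
    t * g a + (1 - t) * g b < g (t * a + (1 - t) * b).

Definition convex_on (S : set R) (g : R -> R) : Prop :=
  forall a b t, S a -> S b -> 0 <= t -> t <= 1 ->
    g (t * a + (1 - t) * b) <= t * g a + (1 - t) * g b.

Definition is_argmax (S : set R) (g : R -> R) (a : R) : Prop :=
  S a /\ forall b, S b -> g b <= g a.

End Model.

(* Main.v *)
Require Import Defs.
From HB Require Import structures.
From mathcomp Require Import all_boot all_order all_algebra.
From mathcomp Require Import all_classical all_reals all_analysis.
From mathcomp Require Import ring lra zify.
Import Order.TTheory GRing.Theory Num.Theory.
Import numFieldNormedType.Exports.
Local Open Scope ring_scope.
Local Open Scope classical_set_scope.

Lemma EW0 (R : realType) (delta a : R) (f : nat -> R) :
  EW delta 0 a f = f 0%N + (1 - delta) * a / (1 + a) * (f 1%N - f 0%N).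
Proof.
rewrite /EW !big_ord_recr big_ord0 /= /W /=.
ring.
Qed.

Lemma EWS (R : realType) (delta a : R) (f : nat -> R) k : 0 < a ->
  EW delta k.+1 a f = (delta * f k + (1 - delta + delta * a) * f k.+1
     + (1 - delta) * a * f k.+2) / (1 + a).
Proof.
move=> a0.
rewrite /EW !big_ord_recr /= big1; last first.
  move=> [i hi] _ /=; rewrite /W /=.
  have -> : (i == k.+2) = false by apply/eqP; lia.
  have -> : (i == k.+1) = false by apply/eqP; lia.
  have -> : (i.+1 == k.+1) = false by apply/eqP; lia.
  by rewrite mul0r.
rewrite /W /= !eqxx.
have -> : (k == k.+2) = false by apply/eqP; lia.
have -> : (k == k.+1) = false by apply/eqP; lia.
have -> : (k.+1 == k.+2) = false by apply/eqP; lia.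
have h : 1 + a != 0 by rewrite lt0r_neq0 // ltr_wpDr // ltW.
by field.
Qed.

Lemma foo (R : realType) (delta a : R) : delta < 1 -> 0 < delta * a -> 0 <= 1 - delta + delta * a.
Proof. move=> a0 h. lra. Qed.

Lemma EW_mono {R : realType} {delta : R} (d0 : 0 < delta) (d1 : delta < 1) (f : nat -> R) (a : R) x : 0 < a -> (forall y, f y <= f y.+1) ->
  EW delta x a f <= EW delta x.+1 a f.
Proof.
move=> a0 hf; have h : 1 + a != 0 by rewrite lt0r_neq0 // ltr_wpDr // ltW.
have pa : 0 < 1 + a by lra.
rewrite -subr_ge0; case: x => [|k].
  rewrite EWS // EW0.
  have -> : (delta * f 0%N + (1 - delta + delta * a) * f 1%N + (1 - delta) * a * f 2%N) /
    (1 + a) - (f 0%N + (1 - delta) * a / (1 + a) * (f 1%N - f 0%N)) =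
    ((1 - delta + delta * a) * (f 1%N - f 0%N) + (1 - delta) * a * (f 2%N - f 1%N)) / (1 + a)
    by field.
  apply: divr_ge0; last lra.
  have := hf 0%N; have := hf 1%N => h1 h2.
  have := mulr_gt0 d0 a0 => hda.
  apply: addr_ge0; apply: mulr_ge0; try lra; apply: mulr_ge0; lra.
rewrite !EWS //.
have -> : (delta * f k.+1 + (1 - delta + delta * a) * f k.+2 + (1 - delta) * a * f k.+3) / (1 + a) -
  (delta * f k + (1 - delta + delta * a) * f k.+1 + (1 - delta) * a * f k.+2) / (1 + a) =
  (delta * (f k.+1 - f k) + (1 - delta + delta * a) * (f k.+2 - f k.+1)
     + (1 - delta) * a * (f k.+3 - f k.+2)) / (1 + a) by field.
apply: divr_ge0; last lra.
have := hf k; have := hf k.+1; have := hf k.+2 => h1 h2 h3.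
have := mulr_gt0 d0 a0 => hda.
apply: addr_ge0; first apply: addr_ge0; apply: mulr_ge0; try lra; apply: mulr_ge0; lra.
Qed.

Lemma EW_ub {R : realType} {delta : R} (d0 : 0 < delta) (d1 : delta < 1) (f : nat -> R) (a : R) x : 0 < a -> (forall y, f y <= f y.+1) ->
  EW delta x a f <= f x.+1.
Proof.
move=> a0 hf; have h : 1 + a != 0 by rewrite lt0r_neq0 // ltr_wpDr // ltW.
have pa : 0 < 1 + a by lra.
rewrite -subr_ge0; case: x => [|k].
  rewrite EW0.
  have -> : f 1%N - (f 0%N + (1 - delta) * a / (1 + a) * (f 1%N - f 0%N)) =
    (1 + delta * a) * (f 1%N - f 0%N) / (1 + a) by field.
  apply: divr_ge0; last lra.
  have := mulr_gt0 d0 a0 => hda.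
  have := hf 0%N => h0; apply: mulr_ge0; lra.
rewrite !EWS //.
have -> : f k.+2 -
  (delta * f k + (1 - delta + delta * a) * f k.+1 + (1 - delta) * a * f k.+2) / (1 + a) =
  (delta * (f k.+2 - f k) + (1 - delta + delta * a) * (f k.+2 - f k.+1)) / (1 + a) by field.
apply: divr_ge0; last lra.
have := hf k; have := hf k.+1 => h1 h2.
have := mulr_gt0 d0 a0 => hda.
apply: addr_ge0; apply: mulr_ge0; lra.
Qed.

Lemma EW_form {R : realType} {delta : R} (d0 : 0 < delta) (d1 : delta < 1) (f : nat -> R) x : (forall y, f y < f y.+1) ->
  exists q d, 0 < d /\ forall a, 0 < a -> EW delta x a f = q - d / (1 + a).
Proof.
move=> hf; case: x => [|k].
  exists (f 0%N + (1 - delta) * (f 1%N - f 0%N)), ((1 - delta) * (f 1%N - f 0%N)).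
  split; first by have := hf 0%N => h0; apply: mulr_gt0; lra.
  move=> a a0; have h : 1 + a != 0 by rewrite lt0r_neq0 // ltr_wpDr // ltW.
  rewrite EW0; by field.
exists (delta * f k.+1 + (1 - delta) * f k.+2),
  (delta * (f k.+1 - f k) + (1 - delta) * (f k.+2 - f k.+1)).
split; first by have := hf k; have := hf k.+1 => h1 h2; apply: addr_gt0; apply: mulr_gt0; lra.
move=> a a0; have h : 1 + a != 0 by rewrite lt0r_neq0 // ltr_wpDr // ltW.
rewrite EWS //; by field.
Qed.


Lemma inv_sc (R : realType) (a b t : R) : 0 < a -> 0 < b -> a != b -> 0 < t -> t < 1 ->
  (1 + (t * a + (1 - t) * b))^-1 < t / (1 + a) + (1 - t) / (1 + b).
Proof.
move=> a0 b0 ab t0 t1.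
have ha : 1 + a != 0 by rewrite lt0r_neq0 // ltr_wpDr // ltW.
have hb : 1 + b != 0 by rewrite lt0r_neq0 // ltr_wpDr // ltW.
have pm : 0 < 1 + (t * a + (1 - t) * b) by nra.
have hm : 1 + (t * a + (1 - t) * b) != 0 by rewrite lt0r_neq0.
have hp : (1 + a) * (1 + b) * (1 + (t * a + (1 - t) * b)) != 0 by rewrite !mulf_neq0.
rewrite -subr_gt0.
have -> : t / (1 + a) + (1 - t) / (1 + b) - (1 + (t * a + (1 - t) * b))^-1 =
  t * (1 - t) * (a - b) ^+ 2 / ((1 + a) * (1 + b) * (1 + (t * a + (1 - t) * b))).
  by field; rewrite hm ha hb.
apply: divr_gt0.
  apply: mulr_gt0; first by apply: mulr_gt0; lra.
  by rewrite lt0r sqr_ge0 andbT sqrf_eq0 subr_eq0.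
apply: mulr_gt0 => //; apply: mulr_gt0; lra.
Qed.

Theorem mainTheorem7 (R : realType) (M : topologicalType)
  (alo delta beta : R) (u : nat -> M -> R) (c : R -> R) (V : nat -> M -> R) :
  0 < alo -> alo < 1 -> 0 < delta -> delta < 1 -> 0 < beta -> beta < 1 ->
  (* c continuous, increasing and convex on A *)
  {within Aset alo, continuous c} ->
  (forall a b, Aset alo a -> Aset alo b -> a <= b -> c a <= c b) ->
  convex_on (Aset alo) c ->
  (* u discretely convex and strictly increasing in x, continuous in m *)
  (forall m, discretely_convex (fun x => u x m)) ->
  (forall m x, u x m < u x.+1 m) ->
  (forall x, continuous (u x)) ->
  (* V satisfies the Bellman equation (with the max attained) *)
  (forall x m,
     (exists2 a, Aset alo a & V x m = H delta beta u c V x m a) /\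
     (forall a, Aset alo a -> H delta beta u c V x m a <= V x m)) ->
  (* V is the pointwise limit of T^n 0 *)
  (forall x m,
     (fun n => iter n (Top alo delta beta u c) (fun _ _ => 0) x m) @ \oo
       --> V x m) ->
  (forall x m, strictly_concave_on (Aset alo) (H delta beta u c V x m)) /\
  (forall x m, exists! a, is_argmax (Aset alo) (H delta beta u c V x m) a) /\
  (exists! g : nat -> M -> R,
     forall x m, is_argmax (Aset alo) (H delta beta u c V x m) (g x m)).
Proof.
move=> al0 al1 d0 d1 b0 b1 _ hc hconv _ hu _ hB hlim.
have Apos : forall a, Aset alo a -> 0 < a.
  by move=> a; rewrite /Aset /inA /= => /andP[h1 h2]; lra.
have Aalo : Aset alo alo by rewrite /Aset /inA /=; apply/andP; split; lra.
have Ale : forall a, Aset alo a -> alo <= a.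
  by move=> a; rewrite /Aset /inA /= => /andP[h1 h2].
have Amid : forall a b (t : R), Aset alo a -> Aset alo b -> 0 <= t -> t <= 1 ->
    Aset alo (t * a + (1 - t) * b).
  move=> a b t; rewrite /Aset /inA /= => /andP[ha1 ha2] /andP[hb1 hb2] t0 t1.
  have t1' : 0 <= 1 - t by lra.
  have := ler_wpM2l t0 ha1; have := ler_wpM2l t0 ha2.
  have := ler_wpM2l t1' hb1; have := ler_wpM2l t1' hb2 => e1 e2 e3 e4.
  apply/andP; split; lra.
have mono_iter : forall n m x,
    iter n (Top alo delta beta u c) (fun _ _ => 0) x m <=
    iter n (Top alo delta beta u c) (fun _ _ => 0) x.+1 m.
  elim=> [|n IH] m x /=; first by [].
  move: (iter n _ _) IH => g IH.
  rewrite /Top.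
  apply: ge_sup.
    exists (H delta beta u c g x m alo); exists alo => //.
  move=> y [a Aa <-].
  have hub : has_ubound [set H delta beta u c g x.+1 m a0 | a0 in Aset alo].
    exists (u x.+1 m - c alo + beta * g x.+2 m) => z [b Ab <-].
    rewrite /H.
    have := hc alo b Aalo Ab (Ale b Ab) => e1.
    have := ler_wpM2l (ltW b0) (EW_ub d0 d1 _ _ x.+1 (Apos b Ab) (IH m)) => e2.
    lra.
  apply: le_trans (ub_le_sup hub _); last by exists a.
  rewrite /H.
  have := ler_wpM2l (ltW b0) (EW_mono d0 d1 _ _ x (Apos a Aa) (IH m)) => e2.
  have := hu m x => e1.
  lra.
have Vmono : forall m x, V x m <= V x.+1 m.
  move=> m x.
  rewrite -(cvg_lim (@Rhausdorff R) (hlim x m)) -(cvg_lim (@Rhausdorff R) (hlim x.+1 m)).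
  apply: ler_lim; [exact: cvgP (hlim x m)|exact: cvgP (hlim x.+1 m)|].
  by apply: nearW => n; apply: mono_iter.
have Vinc : forall m x, V x m < V x.+1 m.
  move=> m x.
  have [[a Aa ha] _] := hB x m.
  have [_ hle] := hB x.+1 m.
  have := hle a Aa; rewrite ha /H => e0.
  have := ler_wpM2l (ltW b0) (EW_mono d0 d1 _ _ x (Apos a Aa) (Vmono m)) => e2.
  have := hu m x => e1.
  lra.
have sc : forall x m, strictly_concave_on (Aset alo) (H delta beta u c V x m).
  move=> x m a b t Aa Ab ab t0 t1.
  have [q [d [dp hq]]] := EW_form d0 d1 _ x (Vinc m).
  have Am := Amid a b t Aa Ab (ltW t0) (ltW t1).
  rewrite /H !hq; [|exact: Apos|exact: Apos|exact: Apos].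
  have := hconv a b t Aa Ab (ltW t0) (ltW t1) => e1.
  have e2 : beta * d * (1 + (t * a + (1 - t) * b))^-1 <
      beta * d * (t / (1 + a) + (1 - t) / (1 + b)).
    rewrite ltr_pM2l; last exact: mulr_gt0.
    by apply: inv_sc => //; apply: Apos.
  rewrite -subr_gt0.
  have -> : u x m - c (t * a + (1 - t) * b) + beta * (q - d / (1 + (t * a + (1 - t) * b))) -
     (t * (u x m - c a + beta * (q - d / (1 + a))) +
      (1 - t) * (u x m - c b + beta * (q - d / (1 + b)))) =
     (t * c a + (1 - t) * c b - c (t * a + (1 - t) * b)) +
     (beta * d * (t / (1 + a) + (1 - t) / (1 + b)) - beta * d * (1 + (t * a + (1 - t) * b))^-1).
    ring.
  apply: ltr_wpDl; first by rewrite subr_ge0.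
  by rewrite subr_gt0.
have ex1 : forall x m, exists! a, is_argmax (Aset alo) (H delta beta u c V x m) a.
  move=> x m.
  have [[a Aa ha] hle] := hB x m.
  have am : is_argmax (Aset alo) (H delta beta u c V x m) a.
    by split => // b Ab; rewrite -ha; apply: hle.
  exists a; split => // b [Ab hb].
  case: (eqVneq a b) => // ab; exfalso.
  have h2 : 0 < 1 / 2 :> R by lra.
  have h3 : 1 / 2 < 1 :> R by lra.
  have e := sc x m a b (1/2) Aa Ab ab h2 h3.
  have e3 := am.2 _ (Amid a b (1/2) Aa Ab (ltW h2) (ltW h3)).
  have e4 := hb a Aa.
  move: e e3 e4.
  move: (H delta beta u c V x m a) (H delta beta u c V x m b)
    (H delta beta u c V x m (1 / 2 * a + (1 - 1 / 2) * b)) => p1 p2 p3.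
  clear.
  move=> e e3 e4; lra.
split => //; split => //.
have [g hg] : {g : nat -> M -> R & forall x m,
    is_argmax (Aset alo) (H delta beta u c V x m) (g x m)}.
  apply: (@choice _ _ (fun x (gx : M -> R) =>
     forall m, is_argmax (Aset alo) (H delta beta u c V x m) (gx m))) => x.
  have ex2 : forall m, exists a, is_argmax (Aset alo) (H delta beta u c V x m) a.
    by move=> m; have [a [h _]] := ex1 x m; exists a.
  have [gx hgx] := choice ex2.
  by exists gx.
exists g; split => // g' hg'.
apply/funext => x; apply/funext => m.
have [a [_ ua]] := ex1 x m.
by rewrite -(ua _ (hg x m)) -(ua _ (hg' x m)).
Qed.
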